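(* In the setting described in the context, for every node $j\in V$, $v_j\ge\dfrac{\delta}{\Pr(\zeta(j)=3)}$, where $\Pr(\zeta(j)=3)=1-\delta d_j^\oplus-\delta h_j$.
   Context: An SPSC instance: finite sets $S$ (services), $V$ (nodes), $U$ (users); sizes $s_i>0$; capacities $c_j>0$; for each user $k$ a service $i_k\in S$, a set $T_k\subseteq V$, a reward $w_k>0$. Let $\{x_{ij}\},\{y_k\}$ be an optimal solution of the LP with nonnegative variables: maximize $\sum_ky_kw_k$ s.t. $y_k\le\sum_{j\in T_k}x_{i_kj}$, $y_k\le1$; $\sum_ix_{ij}s_i\le c_j$; $x_{ij}=0$ if $s_i>c_j$; $0\le x_{ij}\le1$. Let $\beta:=1/4$, $\delta:=1/4$. For $j\in V$: $P_j^\oplus:=\{i:c_j/2<s_i\le c_j\}$, $P_j^\ominus:=\{i:c_j/4<s_i\le c_j/2\}$, $d_j^\oplus:=\sum_{i\in P_j^\oplus}x_{ij}$, $d_j^\ominus:=\sum_{i\in P_j^\ominus}x_{ij}$, $v_j:=\delta c_j/\sum_{i\in S:s_i\le c_j\beta}s_ix_{ij}$, $h_j:=d_j^\ominus$ if $d_j^\ominus<2$ and $h_j:=d_j^\ominus/2$ otherwise. The random construction map $\zeta:V\to\{1,2,3\}$ has $\zeta(j)$ independent over $j$, equal to $1,2,3$ with probabilities $\delta d_j^\oplus$, $\delta h_j$, $1-\delta d_j^\oplus-\delta h_j$. *)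

(* Defs.v *)
From mathcomp Require Import all_boot all_order all_algebra.
From mathcomp Require Import constructive_ereal.
Set Implicit Arguments. Unset Strict Implicit. Unset Printing Implicit Defensive.
Import Order.TTheory GRing.Theory Num.Theory.
Local Open Scope ring_scope.

Section SPSC.
Variables (R : realFieldType) (S V U : finType).
Variables (s : S -> R) (c : V -> R) (isvc : U -> S) (T : U -> {set V}) (w : U -> R).

Definition lp_feasible (x : S -> V -> R) (y : U -> R) : Prop :=
  (forall k, 0 <= y k) /\
  (forall k, y k <= \sum_(j in T k) x (isvc k) j) /\
  (forall k, y k <= 1) /\
  (forall j, \sum_(i : S) x i j * s i <= c j) /\
  (forall i j, c j < s i -> x i j = 0) /\
  (forall i j, 0 <= x i j <= 1).

Definition lp_objective (y : U -> R) : R := \sum_(k : U) y k * w k.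

Definition lp_optimal (x : S -> V -> R) (y : U -> R) : Prop :=
  lp_feasible x y /\
  forall x' y', lp_feasible x' y' -> lp_objective y' <= lp_objective y.

Definition beta : R := 1 / 4.
Definition delta : R := 1 / 4.

Variable (x : S -> V -> R).

Definition dplus (j : V) : R :=
  \sum_(i : S | (c j / 2 < s i) && (s i <= c j)) x i j.
Definition dminus (j : V) : R :=
  \sum_(i : S | (c j / 4 < s i) && (s i <= c j / 2)) x i j.
Definition hval (j : V) : R :=
  if dminus j < 2 then dminus j else dminus j / 2.

Definition small_load (j : V) : R :=
  \sum_(i : S | s i <= c j * beta) s i * x i j.

(* v_j := delta c_j / small_load j, read as +oo when the denominator is 0
   (delta c_j > 0). *)
Definition vval (j : V) : \bar R :=
  if small_load j == 0 then +oo%E else ((delta * c j) / small_load j)%:E.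

Definition zeta_prob (j : V) (t : nat) : R :=
  if t == 1%N then delta * dplus j
  else if t == 2%N then delta * hval j
  else if t == 3%N then 1 - delta * dplus j - delta * hval j
  else 0.

End SPSC.

(* Main.v *)
Require Import Defs.
From mathcomp Require Import all_boot all_order all_algebra.
From mathcomp Require Import constructive_ereal.
From mathcomp Require Import lra.
Import Order.TTheory GRing.Theory Num.Theory.
Local Open Scope ring_scope.

Theorem theorem15 (R : realFieldType) (S V U : finType)
  (s : S -> R) (c : V -> R) (isvc : U -> S) (T : U -> {set V}) (w : U -> R)
  (x : S -> V -> R) (y : U -> R) :
  (forall i, 0 < s i) -> (forall j, 0 < c j) -> (forall k, 0 < w k) ->
  lp_optimal s c isvc T w x y ->
  forall j : V,
    ((delta R / zeta_prob s c x j 3) %:E <= vval s c x j)%E.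
Proof.
move=> sP cP _ [[_ [_ [_ [cap [_ x01]]]]] _] j.
have xP : forall i, 0 <= x i j by move=> i; case/andP: (x01 i j).
have cj := cP j.
set L := small_load s c x j.
have L0 : 0 <= L.
  by apply: sumr_ge0 => i _; apply: mulr_ge0; [apply: ltW|].
have dm0 : 0 <= dminus s c x j by apply: sumr_ge0.
have hle : hval s c x j <= dminus s c x j.
  rewrite /hval; case: ifP => _ //; lra.
have B1 : delta R * c j * dplus s c x j <=
   \sum_i (if (c j / 2 < s i) && (s i <= c j) then s i * x i j else 0).
  rewrite -big_mkcond /dplus mulr_sumr; apply: ler_sum => i /andP [H1 _].
  apply: ler_wpM2r => //; rewrite /delta; lra.
have B2 : delta R * c j * dminus s c x j <=
   \sum_i (if (c j / 4 < s i) && (s i <= c j / 2) then s i * x i j else 0).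
  rewrite -big_mkcond /dminus mulr_sumr; apply: ler_sum => i /andP [H1 _].
  apply: ler_wpM2r => //; rewrite /delta; lra.
have B3 : L = \sum_i (if s i <= c j * beta R then s i * x i j else 0).
  by rewrite -big_mkcond.
have Tot : L + delta R * c j * dplus s c x j + delta R * c j * dminus s c x j
    <= c j.
  apply: le_trans (cap j).
  rewrite B3; apply: le_trans; first by apply: lerD; [apply: lerD; [apply: lexx|apply: B1]|apply: B2].
  rewrite -!big_split /=; apply: ler_sum => i _.
  have si := sP i; have xi := xP i; have sx : 0 <= s i * x i j by apply: mulr_ge0 => //; apply: ltW.
  rewrite [x i j * _]mulrC /beta.
  case: (lerP (s i) (c j * (1/4))) => h1;
  case: (ltrP (c j / 2) (s i)) => h2;
  case: (lerP (s i) (c j)) => h3;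
  case: (ltrP (c j / 4) (s i)) => h4;
  case: (lerP (s i) (c j / 2)) => h5; rewrite /=; try lra.
have hd : delta R * c j * hval s c x j <= delta R * c j * dminus s c x j.
  apply: ler_wpM2l => //; apply: mulr_ge0; [rewrite /delta; lra|lra].
rewrite /vval -/L; case: eqP => [_|Lne]; first by rewrite leey.
have Lp : 0 < L by rewrite lt_def L0 andbT; apply/eqP.
rewrite lee_fin /zeta_prob /=.
set P := 1 - _ - _.
have PP : L <= c j * P by rewrite /P; lra.
have Pp : 0 < P.
  rewrite -(pmulr_rgt0 _ cj); lra.
rewrite ler_pdivrMr // mulrAC ler_pdivlMr // mulrC.
have d0 : 0 <= delta R by rewrite /delta; lra.
have H := ler_wpM2l d0 PP.
move: H; rewrite /delta; lra.
Qed.
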